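(* Let $\sigma_X=(\sigma_X^0,\sigma_X[\cdot,\cdot])$ be a memory-one strategy for $X$ and $\sigma_Y$ any behavioral strategy for $Y$, generating the measures $\nu_t$. Then for every measurable $E\subseteq S_X$, $$\sum_{t=0}^\infty\lambda^t\int_{S_X\times S_Y}\Big[\mathbf{1}_E(x)-\lambda\,\sigma_X[x,y](E)\Big]\,d\nu_t(x,y)=\sigma_X^0(E).$$
   Context: Standing framework. Let $S_X,S_Y$ be measurable spaces, and $\lambda\in(0,1)$. For $T\ge 0$ let $\mathcal{H}^T=(S_X\times S_Y)^T$ ($\mathcal{H}^0=\{\varnothing\}$) and $\mathcal{H}=\bigsqcup_{T\ge0}\mathcal{H}^T$. A behavioral strategy for $X$ (resp. $Y$) is a Markov kernel from $\mathcal{H}$ to $S_X$ (resp. $S_Y$). A memory-one strategy for $X$ is a behavioral strategy determined by a probability measure $\sigma_X^0$ on $S_X$ (used at the empty history) and a Markov kernel $(x,y)\mapsto\sigma_X[x,y]$ from $S_X\times S_Y$ to $S_X$, with $\sigma_X[h^T]=\sigma_X[x_{T-1},y_{T-1}]$ for $h^T=((x_0,y_0),\dots,(x_{T-1},y_{T-1}))$, $T\ge1$. Given behavioral strategies $\sigma_X,\sigma_Y$, put $\sigma(h)=\sigma_X[h]\otimes\sigma_Y[h]$ and define probability measures $\mu_t$ on $\mathcal{H}^{t+1}$ by $\mu_0=\sigma(\varnothing)$ and $\mu_t(E'\times E)=\int_{E'}\sigma(h)(E)\,d\mu_{t-1}(h)$ (uniquely extended). Let $\nu_t(E)=\mu_t(\mathcal{H}^t\times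 E)$ be the distribution of the action pair at time $t$. $\mathbf{1}_E$ denotes the indicator of $E$. *)

(* Defs.v *)
From HB Require Import structures.
From mathcomp Require Import all_boot all_order all_algebra.
From mathcomp Require Import all_classical all_reals all_analysis.
Unset Printing Implicit Defensive.
Import Order.TTheory GRing.Theory Num.Theory.
Local Open Scope classical_set_scope.
Local Open Scope ring_scope.
Local Open Scope ereal_scope.

Section Game.
Context {d1 d2 : measure_display} (SX : measurableType d1) (SY : measurableType d2)
  (R : realType).

(* H^T = (S_X x S_Y)^T, built as ((unit * (SX*SY)) * (SX*SY)) * ... ,
   with the product sigma-algebras; H^0 = unit (the empty history). *)
Fixpoint hist (T : nat) : {d : measure_display & measurableType d} :=
  match T with
  | 0 => existT measurableType _ (unit : measurableType _)
  | S n => existT measurableType _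
      ((projT2 (hist n) * (SX * SY))%type : measurableType _)
  end.

Definition H (T : nat) : measurableType (projT1 (hist T)) := projT2 (hist T).

(* the memory-one behavioral strategy determined by sigma_X^0 and sigma_X[.,.]:
   at the empty history use s0, at h^T (T >= 1) use k at the last action pair *)
Definition memory_one (s0 : probability SX R) (k : R.-pker (SX * SY) ~> SX) :
    forall T, H T -> set SX -> \bar R :=
  fun T => match T return H T -> set SX -> \bar R with
           | 0 => fun _ => s0
           | S n => fun h => k h.2
           end.

Variables (sX : forall T, H T -> set SX -> \bar R)
          (sY : forall T, H T -> set SY -> \bar R).

(* sigma(h) = sigma_X[h] (x) sigma_Y[h], the product measure on S_X x S_Y,
   written as the iterated integral (product of two probability measures). *)
Definition sigma T (h : H T) (A : set (SX * SY)) : \bar R :=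
  \int[sX T h]_x sY T h [set y | A (x, y)].

(* mu_t on H^{t+1}: mu_0 = sigma(empty), mu_t(A) = int sigma(h)(A_h) dmu_{t-1}(h)
   (this is the unique extension of mu_t(E' x E) = int_{E'} sigma(h)(E) dmu_{t-1}) *)
Fixpoint mu (t : nat) : set (H t.+1) -> \bar R :=
  match t return set (H t.+1) -> \bar R with
  | 0 => fun A => sigma 0 (tt : H 0) [set a | A (tt, a)]
  | S n => fun A => \int[mu n]_h sigma n.+1 h [set a | A (h, a)]
  end.

Definition nu (t : nat) (E : set (SX * SY)) : \bar R :=
  mu t [set p | E p.2].

End Game.

(* Main.v *)
Require Import Defs.
From HB Require Import structures.
From mathcomp Require Import all_boot all_order all_algebra.
From mathcomp Require Import all_classical all_reals all_analysis.
From mathcomp Require Import measurable_realfun.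
From mathcomp Require Import ring.
Import numFieldNormedType.Exports.
Import Order.TTheory GRing.Theory Num.Theory.
Local Open Scope classical_set_scope.
Local Open Scope ring_scope.
Set Implicit Arguments.
Unset Strict Implicit.

Section kconst.
Context d d' (X : measurableType d) (Y : measurableType d') (R : realType).
Variable P : probability Y R.
Definition kconst : X -> {measure set Y -> \bar R} := fun _ => P.
Let mk U : measurable U -> measurable_fun [set: X] (kconst ^~ U).
Proof. by move=> _; rewrite (_ : kconst ^~ U = cst (P U))//; exact: measurable_cst. Qed.
HB.instance Definition _ := isKernel.Build _ _ _ _ _ kconst mk.
Let pk x : kconst x [set: Y] = 1%E. Proof. exact: probability_setT. Qed.
HB.instance Definition _ := Kernel_isProbability.Build _ _ _ _ _ kconst pk.
End kconst.

Section ksnd.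
Context d0 d1 d2 (T0 : measurableType d0)
  (T1 : measurableType d1) (T2 : measurableType d2) {R : realType}
  (k : R.-pker T1 ~> T2).
Definition ksnd : (T0 * T1)%type -> {measure set T2 -> \bar R} := k \o snd.
Let mk U : measurable U -> measurable_fun [set: _] (ksnd ^~ U).
Proof.
move=> mU; apply: (measurableT_comp (measurable_kernel k _ mU)).
exact: measurable_snd.
Qed.
HB.instance Definition _ := isKernel.Build _ _ _ _ _ ksnd mk.
Let pk x : ksnd x [set: T2] = 1%E. Proof. exact: prob_kernel. Qed.
HB.instance Definition _ := Kernel_isProbability.Build _ _ _ _ _ ksnd pk.
End ksnd.

Section kfst.
Context d0 d1 d2 (T0 : measurableType d0)
  (T1 : measurableType d1) (T2 : measurableType d2) {R : realType}
  (k : R.-pker T0 ~> T2).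
Definition kfst : (T0 * T1)%type -> {measure set T2 -> \bar R} := k \o fst.
Let mk U : measurable U -> measurable_fun [set: _] (kfst ^~ U).
Proof.
move=> mU; apply: (measurableT_comp (measurable_kernel k _ mU)).
exact: measurable_fst.
Qed.
HB.instance Definition _ := isKernel.Build _ _ _ _ _ kfst mk.
Let pk x : kfst x [set: T2] = 1%E. Proof. exact: prob_kernel. Qed.
HB.instance Definition _ := Kernel_isProbability.Build _ _ _ _ _ kfst pk.
End kfst.

Section kp.
Context d0 d1 d2 (T0 : measurableType d0)
  (T1 : measurableType d1) (T2 : measurableType d2) {R : realType}
  (k1 : R.-pker T0 ~> T1) (k2 : R.-pker (T0 * T1) ~> T2).
Definition kp : T0 -> {measure set (T1 * T2) -> \bar R} := mkproduct k1 k2.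
HB.instance Definition _ := isKernel.Build _ _ _ _ _ kp (measurable_kproduct k1 k2).
Lemma kpE x A : measurable A ->
  kp x A = (\int[k1 x]_y k2 (x, y) (xsection A y))%E.
Proof.
move=> mA; rewrite /kp /= /kproduct; apply: eq_integral => y _.
rewrite /kernel.intker_indic integral_indic//=; last first.
  by rewrite -[X in measurable X]xsectionE; exact: measurable_xsection.
by rewrite setIT xsectionE.
Qed.
Let pk x : kp x [set: T1 * T2] = 1%E.
Proof.
rewrite kpE//.
under eq_integral do rewrite xsectionE preimage_setT prob_kernel.
by rewrite integral_cst//= mul1e prob_kernel.
Qed.
HB.instance Definition _ := Kernel_isProbability.Build _ _ _ _ _ kp pk.
End kp.

Import HBNNSimple.
Lemma int_agree d (T : measurableType d) (R : realType)
  (m1 m2 : set T -> \bar R) D f :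
  (forall A, measurable A -> m1 A = m2 A) ->
  (\int[m1]_(x in D) f x = \int[m2]_(x in D) f x)%E.
Proof.
move=> h; rewrite /integral; congr (_ - _)%E; congr ereal_sup;
  apply/seteqP; split => _ [g hg <-]; exists g => //;
  apply: eq_fsbigr => r _; rewrite h //; exact: (measurable_funPTI g (measurable_set1 r)).
Qed.

Unset Implicit Arguments.
Section game.
Context (d1 d2 : measure_display) (SX : measurableType d1)
  (SY : measurableType d2) (R : realType)
  (s0 : probability SX R) (k : R.-pker (SX * SY) ~> SX)
  (sY : forall T, R.-pker (H SX SY T) ~> SY).

Definition K1 T : R.-pker (H SX SY T) ~> SX :=
  match T return R.-pker (H SX SY T) ~> SX with
  | 0 => (kconst (X := H SX SY 0) s0 : R.-pker _ ~> _)
  | S n => (ksnd (T0 := H SX SY n) k : R.-pker _ ~> _)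
  end.

Definition sig T : R.-pker (H SX SY T) ~> (SX * SY)%type :=
  kp (K1 T) (kfst (T1 := SX) (sY T)).

Definition Mstep T (P : R.-pker unit ~> H SX SY T) : R.-pker unit ~> H SX SY T.+1 :=
  kp P (ksnd (T0 := unit) (sig T)).

Definition pu : probability unit R := \d_tt.
Definition kunit : R.-pker unit ~> H SX SY 0 := kconst (X := unit) pu.

Fixpoint M t : R.-pker unit ~> H SX SY t.+1 :=
  match t with 0 => Mstep 0 kunit | S n => Mstep n.+1 (M n) end.


Lemma K1E T h : memory_one SX SY R s0 k T h = K1 T h.
Proof. by case: T h. Qed.

Lemma sigE T h B : measurable B ->
  sigma SX SY R (memory_one SX SY R s0 k) (fun T h => sY T h) T h B = sig T h B.
Proof.
move=> mB; rewrite /sig kpE// /sigma K1E.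
by apply: eq_integral => x _; rewrite xsectionE.
Qed.



Lemma muE t A : measurable A ->
  mu SX SY R (memory_one SX SY R s0 k) (fun T h => sY T h) t A = M t tt A.
Proof.
elim: t A => [|t IH] A mA.
  rewrite /= /Mstep kpE//.
  rewrite (_ : (\int[_]_y _ = sig 0 tt (xsection A tt))%E); last first.
    transitivity (\int[kunit tt]_(y in setT) cst (sig 0 tt (xsection A tt)) y)%E.
      by apply: eq_integral => -[].
    by rewrite integral_cst//= probability_setT mule1.
  rewrite -sigE; try exact: measurable_xsection; by rewrite xsectionE.
rewrite [LHS]/= (_ : M t.+1 tt A = kp (M t) (ksnd (T0:=unit) (sig t.+1)) tt A)// kpE//.
transitivity (\int[mu SX SY R (memory_one SX SY R s0 k) (fun T h => sY T h) t]_h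
   sig t.+1 h (xsection A h))%E.
  congr (integral _ _ _); apply/funext => h; rewrite -sigE; try exact: measurable_xsection; by rewrite xsectionE.
exact: int_agree.
Qed.


Lemma bdd_integrable d (T : measurableType d) (m : {measure set T -> \bar R})
    (f : T -> \bar R) (c : R) :
  m setT = 1%E -> measurable_fun setT f -> (forall x, `|f x| <= c%:E)%E ->
  m.-integrable setT f.
Proof.
move=> m1 mf fc; apply/integrableP; split => //.
apply: (@le_lt_trans _ _ (\int[m]_(x in setT) (cst c%:E) x)%E).
  apply: ge0_le_integral => //; exact: measurableT_comp.
by rewrite (integral_cst m measurableT) m1 mule1 ltry.
Qed.

Lemma nuint t f : measurable_fun setT f ->
  (M t tt).-integrable setT (f \o snd) ->
  (\int[nu SX SY R (memory_one SX SY R s0 k) (fun T h => sY T h) t]_p f p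
   = \int[M t tt]_h f h.2)%E.
Proof.
move=> mf intf.
rewrite (int_agree (m2 := pushforward (M t tt) snd)).
  by rewrite integral_pushforward//; rewrite preimage_setT.
move=> B mB; rewrite /nu muE//.
rewrite -[X in measurable X]setTI; exact: measurable_snd.
Qed.


Lemma kle1 d d' (X : measurableType d) (Y : measurableType d')
  (kk : R.-pker X ~> Y) x B : measurable B -> (kk x B <= 1)%E.
Proof.
move=> mB; rewrite -(@prob_kernel _ _ _ _ _ kk x); apply: le_measure; rewrite ?inE//.
Qed.

Variables (E : set SX) (mE : measurable E).

Definition A t : set (H SX SY t.+1) := [set h | E h.2.1].

Definition a t := M t tt (A t).

Lemma mA t : measurable (A t).
Proof.
have -> : A t = setT `*` (E `*` setT).
  by apply/seteqP; split => [h /= Eh|h /= [_ []]//]; split=> //.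
by apply: measurableX => //; exact: measurableX.
Qed.

Lemma sigEX T h : sig T h (E `*` setT) = K1 T h E.
Proof.
rewrite /sig kpE; last exact: measurableX.
transitivity (\int[K1 T h]_x (\1_E x)%:E)%E.
  apply: eq_integral => x _; rewrite /kfst /= indicE.
  case: (boolP (x \in E)) => xE.
    by rewrite in_xsectionX// prob_kernel.
  by rewrite notin_xsectionX// measure0.
by rewrite integral_indic// setIT.
Qed.

Lemma xsA t h : xsection (A t.+1) h = E `*` setT.
Proof.
rewrite xsectionE; apply/seteqP; split => [y /= Ey|y /= [] //]; by split.
Qed.

Lemma a_succ t : a t.+1 = (\int[M t tt]_h k h.2 E)%E.
Proof.
rewrite /a (_ : M t.+1 tt _ = kp (M t) (ksnd (T0:=unit) (sig t.+1)) tt (A t.+1))//.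
rewrite (kpE (M t) (ksnd (T0:=unit) (sig t.+1)) tt (mA t.+1)).
apply: eq_integral => h _; rewrite xsA.
exact: (sigEX t.+1 h).
Qed.

Lemma a0 : a 0 = s0 E.
Proof.
rewrite /a (_ : M 0 tt _ = kp kunit (ksnd (T0:=unit) (sig 0)) tt (A 0))//.
rewrite (kpE kunit (ksnd (T0:=unit) (sig 0)) tt (mA 0)).
transitivity (\int[kunit tt]_(y in setT) cst (sig 0 tt (E `*` setT)) y)%E.
  apply: eq_integral => -[] _.
  change (sig 0 tt (xsection (A 0) tt) = sig 0 tt (E `*` setT)); congr (sig 0 tt _).
  rewrite xsectionE; apply/seteqP; split => [y /= Ey|y /= [] //]; by split.
rewrite integral_cst// (@prob_kernel _ _ _ _ _ kunit tt) mule1.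
exact: (sigEX 0 tt).
Qed.

Lemma a_bnd t : (0 <= a t <= 1)%E.
Proof. by rewrite measure_ge0 /a kle1//; exact: mA. Qed.


Lemma term t (lam : R) : (0 <= lam)%R -> (lam <= 1)%R ->
  (\int[nu SX SY R (memory_one SX SY R s0 k) (fun T h => sY T h) t]_p
      ((\1_E p.1)%:E - lam%:E * k p E) = a t - lam%:E * a t.+1)%E.
Proof.
move=> l0 l1.
have mf1 : measurable_fun setT (fun p : (SX * SY)%type => (\1_E p.1 : R)%:E).
  have h1 : measurable_fun setT (fun p : (SX * SY)%type => (\1_E p.1 : R)).
    by apply: measurableT_comp; [exact: measurable_indic|exact: measurable_fst].
  exact/measurable_EFinP.
have mk : measurable_fun setT (fun p : (SX * SY)%type => k p E).
  exact: (measurable_kernel k E mE).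
have mf2 : measurable_fun setT (fun p : (SX * SY)%type => lam%:E * k p E)%E.
  exact: measurable_funeM.
have b1 p : (`|(\1_E p.1 : R)%:E| <= 1)%E.
  by rewrite indicE; case: (p.1 \in E); rewrite /= ?normr1 ?normr0 ?lexx ?lee01.
have b3 p : (`|k p E| <= 1)%E by rewrite gee0_abs// kle1.
have b2 p : (`|lam%:E * k p E| <= 1)%E.
  have l0' : (0 <= lam%:E)%E by change (0%:E <= lam%:E)%E; rewrite lee_fin.
  have l1' : (lam%:E <= 1)%E by change (lam%:E <= 1%:E)%E; rewrite lee_fin.
  rewrite gee0_abs; last by apply: mule_ge0.
  rewrite -(mule1 1%E); apply: lee_pmul => //.
  exact: kle1.
have M1 := @prob_kernel _ _ _ _ _ (M t) tt.
have i1 : (M t tt).-integrable setT (fun h => (\1_E h.2.1 : R)%:E).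
  apply: (bdd_integrable _ _ _ _ 1 M1) => [|h]; last exact: b1.
  exact: (measurableT_comp mf1 measurable_snd).
have i2 : (M t tt).-integrable setT (fun h => lam%:E * k h.2 E)%E.
  apply: (bdd_integrable _ _ _ _ 1 M1) => [|h]; last exact: b2.
  exact: (measurableT_comp mf2 measurable_snd).
have i3 : (M t tt).-integrable setT (fun h => k h.2 E).
  apply: (bdd_integrable _ _ _ _ 1 M1) => [|h]; last exact: b3.
  exact: (measurableT_comp mk measurable_snd).
transitivity (\int[M t tt]_h ((\1_E h.2.1)%:E - lam%:E * k h.2 E))%E.
  apply: nuint; first exact: emeasurable_funB.
  apply: (bdd_integrable _ _ _ _ (1 + 1) M1) => [|h].
    exact: (measurableT_comp (emeasurable_funB mf1 mf2) measurable_snd).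
  apply: (le_trans (lee_abs_sub _ _)).
  by rewrite EFinD; apply: leeD.
have hZ := integralZl measurableT i3 lam; cbv beta in hZ.
rewrite (integralB _ i1 i2).
congr (_ - _)%E; last first.
  by rewrite a_succ; exact: hZ.
rewrite (eq_integral (fun h => (\1_(A t) h)%:E)); last by move=> h _.
rewrite integral_indic ?setIT//. all: try exact: mA. all: exact: measurableT.
Qed.

End game.

Theorem lemma3 (d1 d2 : measure_display) (SX : measurableType d1)
  (SY : measurableType d2) (R : realType) (lam : R)
  (hlam0 : 0 < lam) (hlam1 : lam < 1)
  (s0 : probability SX R) (k : R.-pker (SX * SY) ~> SX)
  (sY : forall T, R.-pker (H SX SY T) ~> SY)
  (E : set SX) (mE : measurable E) :
  (fun n : nat => \sum_(0 <= t < n)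
     ((lam ^+ t)%:E *
      \int[nu SX SY R (memory_one SX SY R s0 k)
                 (fun T h => sY T h) t]_p
         ((\1_E p.1)%:E - lam%:E * k p E))%E)
  @ \oo --> s0 E.
Proof.
pose aa := a d1 d2 SX SY R s0 k sY E.
pose al t := fine (aa t).
have fa t : aa t = (al t)%:E.
  rewrite /al fineK//; have /andP[h0 h1] := a_bnd d1 d2 SX SY R s0 k sY E mE t.
  by rewrite ge0_fin_numE// (le_lt_trans h1) ?ltry.
have alb t : (0 <= al t <= 1)%R.
  have := a_bnd d1 d2 SX SY R s0 k sY E mE t.
  by rewrite -/(aa t) fa !lee_fin.
have l0 : (0 <= lam)%R by exact: ltW.
have l1 : (lam <= 1)%R by exact: ltW.
have -> : (fun n : nat => \sum_(0 <= t < n)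
     ((lam ^+ t)%:E *
      \int[nu SX SY R (memory_one SX SY R s0 k)
                 (fun T h => sY T h) t]_p
         ((\1_E p.1)%:E - lam%:E * k p E))%E) =
   (fun n => (al 0 - lam ^+ n * al n)%:E).
  apply/funext => n.
  under eq_bigr => t _ do rewrite (term d1 d2 SX SY R s0 k sY E mE t lam l0 l1) -/(aa t) -/(aa t.+1) !fa.
  under eq_bigr => t _ do rewrite -EFinM.
  rewrite sumEFin; congr (_%:E).
  elim: n => [|n IH]; first by rewrite big_geq// expr0 mul1r subrr.
  by rewrite big_nat_recr//= IH exprS; ring.
have -> : s0 E = (al 0)%:E by rewrite -fa /aa a0.
apply: cvg_EFin; first by near=> n.
rewrite -[X in _ --> X]subr0; apply: cvgB; first exact: cvg_cst.
apply: (@squeeze_cvgr _ _ _ _ (fun=> 0%R) (fun n => lam ^+ n)).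
- near=> n; apply/andP; split.
    by apply: mulr_ge0; [exact: exprn_ge0|case/andP: (alb n) => ->].
  by apply: ler_piMr; [exact: exprn_ge0|case/andP: (alb n) => _ ->].
- exact: cvg_cst.
- by apply: cvg_expr; rewrite ger0_norm.
Unshelve. all: by end_near.
Qed.
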